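(* Let $\mathbf{a}=(a_1,\dots,a_n)$ be positive integers with sum $a$, $m\ge1$, and $\mathbf{r}=(r_1,\dots,r_m)$, $\mathbf{s}=(s_1,\dots,s_m)$ sequences of nonnegative integers with sums $r$, $s$. Let $N = n +a(r+s)+m\sum_{1\le i<j\le n} a_i a_j+ \sum_{i=1}^m r_i s_i$ and $N^- = n +a(r+s)+m\sum_{1\le i<j\le n} a_i a_j$. Then \[ |\mathrm{SB}(\mathbf{a},\mathbf{r},\mathbf{s})| = |\mathrm{SB}^-(\mathbf{a},\mathbf{r},\mathbf{s})| \frac{N!}{(N^-)!}. \]
   Context: Let $A_i=a_1+\dots+a_i$, $A_0=0$. For nonnegative integers $p,q$, the $(\mathbf{a},p,q)$-staircase: rows $1,\dots,p$ contain columns $1,\dots,a+q$; for $1\le i\le n$ and $A_{i-1}<t\le A_i$, row $p+t$ contains columns $A_{i-1}+1,\dots,a+q$; then, for each $i$, the $a_i\times a_i$ square of rows $p+A_{i-1}+1,\dots,p+A_i$ and columns $A_{i-1}+1,\dots,A_i$ is merged into a single cell, the $i$th diagonal cell, regarded as lying in each of these rows and columns. The $(\mathbf{a},p,q)^-$-staircase is obtained by further removing the cells in rows $1,\dots,p$ and columns $a+1,\dots,a+q$. Taking pages = the $(\mathbf{a},r_i,s_i)$-staircases (resp. $(\mathbf{a},r_i,s_i)^-$-staircases), $1\le i\le m$, with the $j$th diagonal cells of all pages identified, an $(\mathbf{a},\mathbf{r},\mathbf{s})$-Selberg book (resp. $(\mathbf{a},\mathbf{r},\mathbf{s})^-$-Selberg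 book) is a filling of the resulting cells with $1,\dots,N$ (resp. $1,\dots,N^-$), each used once, such that every non-diagonal cell has entry larger than that of the diagonal cell in its row (if any) and smaller than that of the diagonal cell in its column (if any). $\mathrm{SB}(\mathbf{a},\mathbf{r},\mathbf{s})$, $\mathrm{SB}^-(\mathbf{a},\mathbf{r},\mathbf{s})$ denote these sets. *)

(* Defs.v *)
From mathcomp Require Import all_boot.
Unset Printing Implicit Defensive.

(* Everything is 0-based:
   rows/columns are indexed from 0, pages by 'I_m, diagonal cells by 'I_n,
   and the labels 1..N are represented by 'I_N = {0,..,N-1}
   (an order-preserving shift by one). *)

Definition Apre (n : nat) (a : 'I_n -> nat) (i : 'I_n) : nat :=
  \sum_(j < n | j < i) a j.

Arguments Apre {n} a i.

Definition atot (n : nat) (a : 'I_n -> nat) : nat := \sum_(j < n) a j.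

Arguments atot {n} a.

Definition inblock (n : nat) (a : 'I_n -> nat) (i : 'I_n) (t : nat) : bool :=
  (Apre a i <= t) && (t < Apre a i + a i).

Arguments inblock {n} a i t.

(* a bound large enough for all row/column indices *)
Definition Bnd (n : nat) (a : 'I_n -> nat) (m : nat) (r s : 'I_m -> nat) : nat :=
  atot a + \sum_(k < m) r k + \sum_(k < m) s k + 1.

Arguments Bnd {n} a {m} r s.

Definition Box (n : nat) (a : 'I_n -> nat) (m : nat) (r s : 'I_m -> nat) := ('I_m * 'I_(Bnd a r s) * 'I_(Bnd a r s))%type.

Arguments Box {n} a {m} r s.

(* Non-diagonal cell (k, x, y) of page k of the (a, r_k, s_k)-staircase
   (or of the (a, r_k, s_k)^- staircase when minus = true). *)
Definition cellpred (minus : bool) n (a : 'I_n -> nat) m (r s : 'I_m -> nat)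
    (c : Box a r s) : bool :=
  let k := c.1.1 in let x := val c.1.2 in let y := val c.2 in
  [&& x < r k + atot a, y < atot a + s k,
      (x < r k) || [exists i : 'I_n, inblock a i (x - r k) && (Apre a i + a i <= y)]
    & ~~ [&& minus, x < r k & atot a <= y]].

Arguments cellpred minus {n} a {m} r s c.

(* Cells of the book: the n shared diagonal cells, plus the non-diagonal
   cells of all pages. *)
Definition Cell (minus : bool) n (a : 'I_n -> nat) m (r s : 'I_m -> nat) :=
  ('I_n + {c : Box a r s | cellpred minus a r s c})%type.

Arguments Cell minus {n} a {m} r s.

Definition goodfill (minus : bool) n (a : 'I_n -> nat) m (r s : 'I_m -> nat) (N : nat)
    (f : {ffun Cell minus a r s -> 'I_N}) : bool :=
  injectiveb f && [forall v : 'I_N, exists c, f c == v] &&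
  [forall c : {c : Box a r s | cellpred minus a r s c},
     let k := (val c).1.1 in let x := val (val c).1.2 in let y := val (val c).2 in
     [forall i : 'I_n, ((r k <= x) && inblock a i (x - r k)) ==>
                        (f (inl i) < f (inr c))] &&
     [forall j : 'I_n, inblock a j y ==> (f (inr c) < f (inl j))]].

Arguments goodfill minus {n} a {m} r s {N} f.

Definition e2 (n : nat) (a : 'I_n -> nat) : nat :=
  \sum_(i < n) \sum_(j < n | i < j) a i * a j.

Arguments e2 {n} a.

Definition Nminus n (a : 'I_n -> nat) m (r s : 'I_m -> nat) : nat :=
  n + atot a * (\sum_(k < m) r k + \sum_(k < m) s k) + m * e2 a.

Arguments Nminus {n} a {m} r s.

Definition Nfull n (a : 'I_n -> nat) m (r s : 'I_m -> nat) : nat :=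
  Nminus a r s + \sum_(k < m) r k * s k.

Arguments Nfull {n} a {m} r s.

Definition SB n (a : 'I_n -> nat) m (r s : 'I_m -> nat) :=
  [set f : {ffun Cell false a r s -> 'I_(Nfull a r s)} | goodfill _ a r s f].

Definition SBminus n (a : 'I_n -> nat) m (r s : 'I_m -> nat) :=
  [set f : {ffun Cell true a r s -> 'I_(Nminus a r s)} | goodfill _ a r s f].

Arguments SB {n} a {m} r s.
Arguments SBminus {n} a {m} r s.

(* Main.v *)
Require Import Defs.
From mathcomp Require Import all_boot zify.
Set Implicit Arguments. Unset Strict Implicit.

Definition good (T : finType) (e : rel T) (N : nat) : {set {ffun T -> 'I_N}} :=
  [set f : {ffun T -> 'I_N} | [&& injectiveb f, [forall v, exists x, f x == v]
            & [forall x, forall y, e x y ==> (f x < f y)]]].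

Arguments good {T} e N.
Lemma inj_surj_bij (T1 T2 : finType) (h : T1 -> T2) :
  injective h -> (forall y, exists x, h x = y) -> bijective h.
Proof.
move=> hi hs.
have Hc y : y \in codom h by case: (hs y) => x <-; apply: codom_f.
exists (fun y => iinv (Hc y)) => [x|y]; last by rewrite f_iinv.
by apply: hi; rewrite f_iinv.
Qed.

Lemma transport_le (T1 T2 : finType) (e1 : rel T1) (e2 : rel T2) N (h : T1 -> T2) :
  bijective h -> (forall x y, e2 (h x) (h y) = e1 x y) ->
  #|good e2 N| <= #|good e1 N|.
Proof.
case=> h' hK h'K he.
pose Phi (g : {ffun T2 -> 'I_N}) : {ffun T1 -> 'I_N} := [ffun x => g (h x)].
have Pinj : injective Phi.
  move=> g1 g2 E; apply/ffunP => y.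
  have := congr1 (fun f : {ffun T1 -> 'I_N} => f (h' y)) E.
  by rewrite /Phi !ffunE h'K.
rewrite -(card_imset _ Pinj); apply: subset_leq_card.
apply/subsetP => _ /imsetP [g Hg ->].
move: Hg; rewrite !inE => /and3P [/injectiveP gi /forallP gs /forallP ge].
apply/and3P; split.
- apply/injectiveP => x y; rewrite /Phi !ffunE => /gi; exact: (can_inj hK).
- apply/forallP => v; case/existsP: (gs v) => y /eqP <-.
  by apply/existsP; exists (h' y); rewrite /Phi ffunE h'K.
- apply/forallP => x; apply/forallP => y; rewrite /Phi !ffunE -he.
  exact: (forallP (ge (h x))).
Qed.

Lemma transport (T1 T2 : finType) (e1 : rel T1) (e2 : rel T2) N (h : T1 -> T2) :
  bijective h -> (forall x y, e2 (h x) (h y) = e1 x y) ->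
  #|good e1 N| = #|good e2 N|.
Proof.
move=> hb he; apply/eqP; rewrite eqn_leq (transport_le N hb he) andbT.
case: (hb) => h' hK h'K.
apply: (@transport_le _ _ _ _ N h'); first by exists h.
by move=> x y; rewrite -he !h'K.
Qed.

Lemma lift_ltn n (p : 'I_n.+1) (i j : 'I_n) : (lift p i < lift p j) = (i < j).
Proof.
rewrite /= /bump; case: (leqP p i); case: (leqP p j); lia.
Qed.

Lemma remove1 (T : finType) (e : rel T) (u : T) N :
  (forall x y, e x y -> (x != u) && (y != u)) ->
  #|good e N.+1| =
  N.+1 * #|good (T := {x : T | x != u}) (fun x y => e (val x) (val y)) N|.
Proof.
move=> eu.
pose T' := {x : T | x != u}.
pose e' := (fun x y : T' => e (val x) (val y)).
have Tcase (x : T) : x = u \/ exists x' : T', x = val x'.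
  case: (eqVneq x u) => [->|xu]; [by left | by right; exists (Sub x xu)].
pose Phi (pg : 'I_N.+1 * {ffun T' -> 'I_N}) : {ffun T -> 'I_N.+1} :=
  [ffun x => oapp (fun x' => lift pg.1 (pg.2 x')) pg.1 (insub x)].
have PhiU pg : Phi pg u = pg.1 by rewrite /Phi ffunE insubF ?eqxx.
have PhiV pg (x' : T') : Phi pg (val x') = lift pg.1 (pg.2 x').
  by rewrite /Phi ffunE valK.
have Pinj : injective Phi.
  move=> [p1 g1] [p2 g2] E.
  have E1 : p1 = p2 by have := PhiU (p1, g1); rewrite E PhiU.
  subst p2; congr (_, _); apply/ffunP => x'.
  by apply: (@lift_inj _ p1); have := PhiV (p1, g1) x'; rewrite E PhiV.
have -> : good e N.+1 = Phi @: (setX [set: 'I_N.+1] (good e' N)).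
  apply/setP => f; apply/idP/idP; last first.
    case/imsetP => [[p g]]; rewrite inE /= => /andP [_].
    rewrite inE => /and3P [/injectiveP gi /forallP gs /forallP ge] ->.
    rewrite inE; apply/and3P; split.
    - apply/injectiveP => x y.
      case: (Tcase x) => [->|[x' ->]]; case: (Tcase y) => [->|[y' ->]] //;
        rewrite ?PhiU ?PhiV /=.
      + by move=> E; have := neq_lift p (g y'); rewrite -E eqxx.
      + by move=> E; have := neq_lift p (g x'); rewrite E eqxx.
      + by move/lift_inj/gi ->.
    - apply/forallP => v; apply/existsP.
      case: (eqVneq p v) => [<-|pv]; first by exists u; rewrite PhiU.
      case: (unlift_some pv) => k -> _.
      case/existsP: (gs k) => x' /eqP gx.
      by exists (val x'); rewrite PhiV /= gx.
    - apply/forallP => x; apply/forallP => y; apply/implyP => exy.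
      case/andP: (eu _ _ exy) => xu yu.
      case: (Tcase x) => [E|[x' Ex]]; first by rewrite E eqxx in xu.
      case: (Tcase y) => [E|[y' Ey]]; first by rewrite E eqxx in yu.
      subst x y; rewrite !PhiV /= lift_ltn.
      exact: (implyP (forallP (ge x') y') exy).
  rewrite inE => /and3P [/injectiveP fi /forallP fs /forallP fe].
  have fn (x' : T') : f u != f (val x').
    apply/eqP => /fi E; have := valP x'; by rewrite -E eqxx.
  have d : T' -> 'I_N by move=> x'; case: (unlift_some (fn x')) => j _ _; exact j.
  pose g := [ffun x' => odflt (d x') (unlift (f u) (f (val x')))].
  have gE x' : f (val x') = lift (f u) (g x').
    by rewrite /g ffunE; case: (unlift_some (fn x')) => j -> ->.
  apply/imsetP; exists (f u, g).
    rewrite !inE /=; apply/and3P; split.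
    - apply/injectiveP => x' y' E; apply: val_inj; apply: fi.
      by rewrite !gE E.
    - apply/forallP => v; case/existsP: (fs (lift (f u) v)) => x /eqP fx.
      case: (Tcase x) => [E|[x' Ex]].
        by have := neq_lift (f u) v; rewrite -fx E eqxx.
      apply/existsP; exists x'; apply/eqP; apply: (@lift_inj _ (f u)).
      by rewrite -gE -Ex.
    - apply/forallP => x'; apply/forallP => y'; apply/implyP => exy.
      by rewrite -(lift_ltn (f u)) -!gE; exact: (implyP (forallP (fe _) _) exy).
  apply/ffunP => x; case: (Tcase x) => [->|[x' ->]]; first by rewrite PhiU.
  by rewrite PhiV gE.
rewrite (card_imset _ Pinj) cardsX cardsT card_ord.
by [].
Qed.

Lemma removeU (k : nat) : forall (T : finType) (e : rel T) (U : {set T}) (N' : nat),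
  #|U| = k -> (forall x y, e x y -> (x \notin U) && (y \notin U)) ->
  #|good e (N' + k)| =
  #|good (T := {x : T | x \notin U}) (fun x y => e (val x) (val y)) N'| * (N' + k) ^_ k.
Proof.
elim: k => [|k IH] T e U N' cU eU.
  rewrite addn0 ffactn0 muln1.
  have U0 : U = set0 by apply/eqP; rewrite -cards_eq0 cU.
  subst U.
  have nU x : x \notin (set0 : {set T}) by rewrite inE.
  apply: (transport N' (h := fun x => Sub x (nU x))) => //.
  apply: inj_surj_bij; first by move=> x y /(congr1 val).
  by move=> y; exists (val y); apply: val_inj.
have : 0 < #|U| by rewrite cU.
rewrite card_gt0 => /set0Pn [u uU].
rewrite addnS (remove1 (u := u)); last first.
  move=> x y /eU /andP [xU yU]; apply/andP; split; apply/eqP => E; subst.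
    by rewrite uU in xU.
  by rewrite uU in yU.
pose U1 := [set x : {x : T | x != u} | val x \in U].
rewrite (IH _ _ U1 N'); last first.
- move=> x y /eU /andP [xU yU]; by rewrite !inE xU yU.
- have : #|U :\ u| = k by move: cU; rewrite (cardsD1 u U) uU add1n => [[]].
  move <-.
  rewrite -(card_imset _ val_inj); apply: eq_card => x.
  rewrite !inE; apply/imsetP/andP => [[y] | [xu xU]].
    by rewrite inE => yU ->; split => //; exact: (valP y).
  by exists (Sub x xu); rewrite ?inE.
rewrite ffactSS mulnCA; congr (_ * _).
have hP (x : {x : {x : T | x != u} | x \notin U1}) : val (val x) \notin U.
  by have := valP x; rewrite inE.
apply: (transport N' (h := fun x => Sub (val (val x)) (hP x))) => //.
apply: inj_surj_bij.
  by move=> x y /(congr1 val) /= /val_inj /val_inj.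
move=> y.
have yu : val y != u by apply/eqP => E; have := valP y; rewrite E uU.
have yU1 : (Sub (val y) yu : {x : T | x != u}) \notin U1 by rewrite inE /=; exact: (valP y).
by exists (Sub (Sub (val y) yu) yU1); apply: val_inj.
Qed.

Definition eC (minus : bool) n (a : 'I_n -> nat) m (r s : 'I_m -> nat) :
  rel (Cell minus a r s) := fun x y =>
  match x, y with
  | inl i, inr c => let k := (val c).1.1 in let xx := val (val c).1.2 in
                    (r k <= xx) && inblock a i (xx - r k)
  | inr c, inl j => inblock a j (val (val c).2)
  | _, _ => false
  end.

Arguments eC minus {n} a {m} r s.
Lemma goodfillE minus n (a : 'I_n -> nat) m (r s : 'I_m -> nat) N
  (f : {ffun Cell minus a r s -> 'I_N}) :
  goodfill minus a r s f = (f \in good (eC minus a r s) N).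
Proof.
rewrite /goodfill inE -andbA; congr [&& _, _ & _].
apply/idP/idP.
  move=> /forallP H; apply/forallP => [[i|c]]; apply/forallP => [[j|d]] //=.
    by case/andP: (H d) => /forallP /(_ i) H1 _.
  by case/andP: (H c) => _ /forallP /(_ j).
move=> /forallP H; apply/forallP => c; apply/andP; split; apply/forallP => i.
  exact: (forallP (H (inl i)) (inr c)).
exact: (forallP (H (inr c)) (inl i)).
Qed.

Definition UFp n (a : 'I_n -> nat) m (r s : 'I_m -> nat) (c : Box a r s) : bool :=
  (val c.1.2 < r c.1.1) && (atot a <= val c.2).
Arguments UFp {n} a {m} r s c.

Definition UF n (a : 'I_n -> nat) m (r s : 'I_m -> nat) : {set Cell false a r s} :=
  [set x | if x is inr c then UFp a r s (val c) else false].
Arguments UF {n} a {m} r s.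

Lemma Apre_le n (a : 'I_n -> nat) j : Apre a j + a j <= atot a.
Proof.
rewrite /atot (bigID (fun i : 'I_n => i < j)) /= leq_add2l.
by rewrite (bigD1 j) ?ltnn //= leq_addr.
Qed.

Lemma eUF n (a : 'I_n -> nat) m (r s : 'I_m -> nat) x y :
  eC false a r s x y -> (x \notin UF a r s) && (y \notin UF a r s).
Proof.
case: x => [i|c]; case: y => [j|d] //=; rewrite !inE /UFp /=.
  by case/andP => H _; rewrite ltnNge H.
rewrite /inblock => /andP [_ H]; rewrite andbT negb_and; apply/orP; right.
by rewrite -ltnNge; apply: (leq_trans H (Apre_le a j)).
Qed.

Lemma cp_true n (a : 'I_n -> nat) m (r s : 'I_m -> nat) c :
  cellpred true a r s c = cellpred false a r s c && ~~ UFp a r s c.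
Proof. by rewrite /cellpred /UFp /= !andbA andbT. Qed.

Lemma cnt B lo hi : lo <= hi ->
  \sum_(y < B) ((lo <= y) && (y < hi)) = minn B hi - minn B lo.
Proof.
move=> lh; elim: B => [|B IH]; first by rewrite big_ord0 !min0n.
rewrite big_ord_recr /= IH.
case: (leqP lo B) => l1; case: (ltnP B hi) => h1 /=; lia.
Qed.

Lemma cardUF n (a : 'I_n -> nat) m (r s : 'I_m -> nat) :
  #|UF a r s| = \sum_(k < m) r k * s k.
Proof.
pose S1 := [set c : {c : Box a r s | cellpred false a r s c} | UFp a r s (val c)].
have -> : UF a r s = inr @: S1.
  apply/setP => [[i|c]]; rewrite inE /=.
    by apply/esym/imsetP => [[c _]].
  apply/idP/imsetP => [H | [c' H [->]]]; first by exists c; rewrite ?inE.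
  by rewrite inE in H.
rewrite card_imset; last by move=> ?? [].
pose P (c : Box a r s) := UFp a r s c && (val c.2 < atot a + s c.1.1).
have -> : #|S1| = #|[set c | P c]|.
  rewrite -(card_imset _ val_inj); apply: eq_card => c; rewrite inE; apply/imsetP/idP.
    case=> c' H ->; rewrite inE in H; rewrite /P H /=.
    by have := valP c'; rewrite /cellpred => /and4P [].
  move=> H; have pf : cellpred false a r s c.
    move: H; rewrite /P /UFp /cellpred => /andP [/andP [H1 H2] H3].
    by rewrite H1 H3 /= (leq_trans H1 (leq_addr _ _)).
  by exists (Sub c pf); rewrite // inE /=; case/andP: H.
rewrite -sum1_card big_mkcond /=.
set B := Bnd a r s.
have rB k : r k <= B.
  rewrite /B /Bnd (bigD1 k) //=; lia.
have sB k : atot a + s k <= B.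
  rewrite /B /Bnd [X in _ + _ + X + _](bigD1 k) //=; lia.
transitivity (\sum_(k < m) \sum_(x < B) \sum_(y < B)
   ((x < r k) * ((atot a <= y) && (y < atot a + s k)))).
  rewrite (pair_bigA _ (fun (k : 'I_m) (x : 'I_B) => \sum_(y < B)
   ((x < r k) * ((atot a <= y) && (y < atot a + s k))))).
  rewrite (pair_bigA _ (fun (kx : 'I_m * 'I_B) (y : 'I_B) =>
   ((kx.2 < r kx.1) * ((atot a <= y) && (y < atot a + s kx.1))))).
  apply: eq_bigr => [[[k x] y]] _; rewrite inE /P /UFp /=.
  by case: (x < r k); case: (atot a <= y); case: (y < _).
apply: eq_bigr => k _.
under eq_bigr do rewrite -big_distrr /=.
rewrite -big_distrl /= cnt ?leq_addr //.
have -> : \sum_(x < B) (x < r k) = \sum_(x < B) ((0 <= x) && (x < r k)) by [].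
rewrite cnt //.
have := rB k; have := sB k => h1 h2.
have -> : minn B (r k) - minn B 0 = r k by lia.
have -> : minn B (atot a + s k) - minn B (atot a) = s k by lia.
by [].
Qed.

Lemma cpF n (a : 'I_n -> nat) m (r s : 'I_m -> nat) c :
  cellpred true a r s c -> cellpred false a r s c.
Proof. by rewrite cp_true => /andP []. Qed.

Definition toF n (a : 'I_n -> nat) m (r s : 'I_m -> nat)
  (c : {c : Box a r s | cellpred true a r s c}) : {c : Box a r s | cellpred false a r s c} :=
  exist _ (val c) (cpF (valP c)).

Lemma toF_UF n (a : 'I_n -> nat) m (r s : 'I_m -> nat) c :
  (inr (toF c) : Cell false a r s) \notin UF a r s.
Proof. by rewrite inE /=; have := valP c; rewrite cp_true => /andP []. Qed.

Lemma inl_UF n (a : 'I_n -> nat) m (r s : 'I_m -> nat) i :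
  (inl i : Cell false a r s) \notin UF a r s.
Proof. by rewrite inE. Qed.

Definition hC n (a : 'I_n -> nat) m (r s : 'I_m -> nat) (x : Cell true a r s) :
  {x : Cell false a r s | x \notin UF a r s} :=
  match x with
  | inl i => exist _ (inl i) (inl_UF a r s i)
  | inr c => exist _ (inr (toF c)) (toF_UF c)
  end.

Lemma hC_bij n (a : 'I_n -> nat) m (r s : 'I_m -> nat) : bijective (@hC n a m r s).
Proof.
apply: inj_surj_bij.
  move=> [i|c] [j|d] /(congr1 val) //= [] // E; first by rewrite E.
  by congr inr; apply: val_inj.
move=> [[i|c] H]; first by exists (inl i); apply: val_inj.
have pf : cellpred true a r s (val c).
  by rewrite cp_true (valP c) /=; move: H; rewrite inE.
by exists (inr (Sub (val c) pf)); apply: val_inj => /=; congr inr; apply: val_inj.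
Qed.

Theorem proposition5p2 (n : nat) (a : 'I_n -> nat) (m : nat) (r s : 'I_m -> nat) :
  (forall i, 0 < a i) -> 0 < m ->
  #|SB a r s| = #|SBminus a r s| * ((Nfull a r s)`! %/ (Nminus a r s)`!).
Proof.
move=> _ _.
have -> : #|SB a r s| = #|good (eC false a r s) (Nfull a r s)|.
  by apply: eq_card => f; rewrite /SB inE goodfillE.
have -> : #|SBminus a r s| = #|good (eC true a r s) (Nminus a r s)|.
  by apply: eq_card => f; rewrite /SBminus inE goodfillE.
rewrite /Nfull -(cardUF a r s) (removeU (U := UF a r s)) //; last exact: eUF.
rewrite ffact_factd ?leq_addl // addnK; congr (_ * _).
symmetry; apply: (transport _ (hC_bij a r s)).
by move=> [i|c] [j|d].
Qed.
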